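(* In the setting of the context, for any $H\in\mathbb S^n$, $$\langle\widetilde{\mathcal D}(H),\widetilde{\mathcal D}^\perp(H)\rangle=2\langle\tilde\Theta\circ\hat H_{\gamma\alpha},\tilde\Theta^\perp\circ\hat H_{\gamma\alpha}\rangle\ge0,$$ with equality if and only if $\hat H_{\gamma\alpha}=0$, and $$\|H\|_F^2-\|\widetilde{\mathcal M}(H)\|_F^2=\|\mathcal P\widetilde{\mathcal D}(H)\|_F^2+\|\mathcal P^\perp\widetilde{\mathcal D}^\perp(H)\|_F^2+4\langle\tilde\Theta\circ\hat H_{\gamma\alpha},\tilde\Theta^\perp\circ\hat H_{\gamma\alpha}\rangle.$$
   Context: $\mathbb S^p$: real symmetric $p\times p$ matrices with trace inner product and Frobenius norm; $\Pi_{\mathbb S^p_+}$ projection onto the PSD cone; $\circ$ Hadamard product. $\mathcal AX=(\langle A_i,X\rangle)_i$ ($A_i\in\mathbb S^n$) surjective, $\mathcal P=\mathcal A^*(\mathcal A\mathcal A^* )^{-1}\mathcal A$, $\mathcal P^\perp=\mathrm{Id}-\mathcal P$. $Z_\star=X_\star-\sigma S_\star$ ($\sigma>0$) for a KKT point $(X_\star,y_\star,S_\star)$ of min $\langle C,X\rangle$ s.t. $\mathcal AX=b$, $X\succeq0$ / max $b^\top y$ s.t. $\mathcal A^*y+S=C$, $S\succeq0$; $r=\operatorname{rank}X_\star$, $s=\operatorname{rank}S_\star$; $Z_\star=Q_\star\operatorname{diag}(\lambda_1,\dots,\lambda_n)Q_\star^\top$ with $Q_\star$ orthogonal and $\lambda_1\ge\dots\ge\lambda_r>0=\lambda_{r+1}=\dots=\lambda_{n-s}>\lambda_{n-s+1}\ge\dots\ge\lambda_n$.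 Index sets $\alpha=\{1..r\}$, $\beta=\{r+1..n-s\}$, $\gamma=\{n-s+1..n\}$; $\hat H=Q_\star^\top HQ_\star$ with blocks $\hat H_{\alpha\alpha},\hat H_{\beta\alpha},\hat H_{\gamma\alpha},\hat H_{\beta\beta},\hat H_{\gamma\beta},\hat H_{\gamma\gamma}$. $\tilde\Theta\in\mathbb R^{s\times r}$, $\tilde\Theta_{ij}=\lambda_j/(\lambda_j-\lambda_{n-s+i})$, $\tilde\Theta^\perp=E_{s\times r}-\tilde\Theta$ (all-ones minus $\tilde\Theta$). $\widetilde{\mathcal D}(H)=Q_\star\begin{pmatrix}\hat H_{\alpha\alpha}&\hat H_{\beta\alpha}^\top&\tilde\Theta^\top\circ\hat H_{\gamma\alpha}^\top\\\hat H_{\beta\alpha}&\Pi_{\mathbb S^{|\beta|}_+}(\hat H_{\beta\beta})&0\\\tilde\Theta\circ\hat H_{\gamma\alpha}&0&0\end{pmatrix}Q_\star^\top$, $\widetilde{\mathcal D}^\perp(H)=H-\widetilde{\mathcal D}(H)$, $\widetilde{\mathcal M}(H)=\mathcal P\widetilde{\mathcal D}^\perp(H)+\mathcal P^\perp\widetilde{\mathcal D}(H)$. *)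

(* Defs.v *)
From HB Require Import structures.
From mathcomp Require Import all_boot all_order all_algebra.
From mathcomp Require Import boolp classical_sets reals.
Set Implicit Arguments. Unset Strict Implicit. Unset Printing Implicit Defensive.
Import Order.TTheory GRing.Theory Num.Theory.
Local Open Scope ring_scope.

Section Defs.
Variable R : realType.

Definition frob (p q : nat) (A B : 'M[R]_(p, q)) : R :=
  \sum_(i < p) \sum_(j < q) A i j * B i j.

Definition hadamard (p q : nat) (A B : 'M[R]_(p, q)) : 'M[R]_(p, q) :=
  \matrix_(i, j) (A i j * B i j).

Definition symmx (k : nat) (A : 'M[R]_k) : Prop := A^T = A.

Definition psd (k : nat) (A : 'M[R]_k) : Prop :=
  symmx A /\ forall v : 'cV[R]_k, 0 <= (v^T *m A *m v) 0 0.

Definition proj_psd (k : nat) (M : 'M[R]_k) : 'M[R]_k :=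
  xget 0 (fun Y : 'M[R]_k => psd Y /\
          forall Y' : 'M[R]_k, psd Y' -> frob (M - Y) (M - Y) <= frob (M - Y') (M - Y')).

Definition Aop (m k : nat) (As : 'I_m -> 'M[R]_k) (X : 'M[R]_k) : 'cV[R]_m :=
  \col_i frob (As i) X.
Definition Aadj (m k : nat) (As : 'I_m -> 'M[R]_k) (y : 'cV[R]_m) : 'M[R]_k :=
  \sum_(i < m) y i 0 *: As i.
Definition AAadj (m k : nat) (As : 'I_m -> 'M[R]_k) : 'M[R]_m :=
  \matrix_(i, j) frob (As i) (As j).
Definition Pop (m k : nat) (As : 'I_m -> 'M[R]_k) (H : 'M[R]_k) : 'M[R]_k :=
  Aadj As (invmx (AAadj As) *m Aop As H).
Definition Pperp (m k : nat) (As : 'I_m -> 'M[R]_k) (H : 'M[R]_k) : 'M[R]_k :=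
  H - Pop As H.

(* Index sets: n = r + b + s with alpha = first r, beta = next b (= n-r-s),
   gamma = last s indices. *)
Definition alpha (r b s : nat) (j : 'I_r) : 'I_(r + b + s) := lshift s (lshift b j).
Definition gamma (r b s : nat) (i : 'I_s) : 'I_(r + b + s) := rshift (r + b) i.

Definition Theta (r b s : nat) (lam : 'rV[R]_(r + b + s)) : 'M[R]_(s, r) :=
  \matrix_(i, j) (lam 0 (alpha b s j) / (lam 0 (alpha b s j) - lam 0 (gamma r b i))).
Definition Thetap (r b s : nat) (lam : 'rV[R]_(r + b + s)) : 'M[R]_(s, r) :=
  const_mx 1 - Theta lam.

Definition Hhat (k : nat) (Q H : 'M[R]_k) : 'M[R]_k := Q^T *m H *m Q.
Definition blk_aa (r b s : nat) (M : 'M[R]_(r + b + s)) : 'M[R]_r := ulsubmx (ulsubmx M).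
Definition blk_ba (r b s : nat) (M : 'M[R]_(r + b + s)) : 'M[R]_(b, r) := dlsubmx (ulsubmx M).
Definition blk_bb (r b s : nat) (M : 'M[R]_(r + b + s)) : 'M[R]_b := drsubmx (ulsubmx M).
Definition blk_ga (r b s : nat) (M : 'M[R]_(r + b + s)) : 'M[R]_(s, r) := lsubmx (dlsubmx M).

Definition Dt (r b s : nat) (Q : 'M[R]_(r + b + s)) (lam : 'rV[R]_(r + b + s))
    (H : 'M[R]_(r + b + s)) : 'M[R]_(r + b + s) :=
  let Hh := Hhat Q H in
  let TH := hadamard (Theta lam) (blk_ga Hh) in
  Q *m block_mx
        (block_mx (blk_aa Hh) (blk_ba Hh)^T (blk_ba Hh) (proj_psd (blk_bb Hh)))
        (col_mx (TH^T) 0)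
        (row_mx TH 0)
        0
    *m Q^T.

Definition Dtp (r b s : nat) (Q : 'M[R]_(r + b + s)) (lam : 'rV[R]_(r + b + s))
    (H : 'M[R]_(r + b + s)) : 'M[R]_(r + b + s) := H - Dt Q lam H.

Definition Mt (m r b s : nat) (As : 'I_m -> 'M[R]_(r + b + s)) (Q : 'M[R]_(r + b + s))
    (lam : 'rV[R]_(r + b + s)) (H : 'M[R]_(r + b + s)) : 'M[R]_(r + b + s) :=
  Pop As (Dtp Q lam H) + Pperp As (Dt Q lam H).

End Defs.

(* Main.v *)
Require Import Defs.
From HB Require Import structures.
From mathcomp Require Import all_boot all_order all_algebra.
From mathcomp Require Import boolp classical_sets reals.
From mathcomp Require Import ring lra.
Import Order.TTheory GRing.Theory Num.Theory.
Local Open Scope ring_scope.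
Set Implicit Arguments. Unset Strict Implicit.



Section Frob.
Variable R : realType.

Lemma frobC p q (A B : 'M[R]_(p, q)) : frob A B = frob B A.
Proof. by rewrite /frob; apply: eq_bigr => i _; apply: eq_bigr => j _; rewrite mulrC. Qed.

Lemma frobDl p q (A B C : 'M[R]_(p, q)) : frob (A + B) C = frob A C + frob B C.
Proof.
rewrite /frob -big_split; apply: eq_bigr => i _; rewrite -big_split.
by apply: eq_bigr => j _; rewrite mxE mulrDl.
Qed.

Lemma frobNl p q (A C : 'M[R]_(p, q)) : frob (- A) C = - frob A C.
Proof.
rewrite /frob -sumrN; apply: eq_bigr => i _; rewrite -sumrN.
by apply: eq_bigr => j _; rewrite mxE mulNr.
Qed.

Lemma frobZl p q k (A C : 'M[R]_(p, q)) : frob (k *: A) C = k * frob A C.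
Proof.
rewrite /frob mulr_sumr; apply: eq_bigr => i _; rewrite mulr_sumr.
by apply: eq_bigr => j _; rewrite mxE mulrA.
Qed.

Lemma frobDr p q (A B C : 'M[R]_(p, q)) : frob C (A + B) = frob C A + frob C B.
Proof. by rewrite !(frobC C) frobDl. Qed.
Lemma frobNr p q (A C : 'M[R]_(p, q)) : frob C (- A) = - frob C A.
Proof. by rewrite !(frobC C) frobNl. Qed.
Lemma frobZr p q k (A C : 'M[R]_(p, q)) : frob C (k *: A) = k * frob C A.
Proof. by rewrite !(frobC C) frobZl. Qed.
Lemma frobBr p q (A B C : 'M[R]_(p, q)) : frob C (A - B) = frob C A - frob C B.
Proof. by rewrite frobDr frobNr. Qed.
Lemma frobBl p q (A B C : 'M[R]_(p, q)) : frob (A - B) C = frob A C - frob B C.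
Proof. by rewrite frobDl frobNl. Qed.

Lemma frob0l p q (A : 'M[R]_(p, q)) : frob 0 A = 0.
Proof. by rewrite /frob big1 // => i _; rewrite big1 // => j _; rewrite mxE mul0r. Qed.
Lemma frob0r p q (A : 'M[R]_(p, q)) : frob A 0 = 0.
Proof. by rewrite frobC frob0l. Qed.

Lemma frob_ge0 p q (A : 'M[R]_(p, q)) : 0 <= frob A A.
Proof. by rewrite /frob sumr_ge0 // => i _; rewrite sumr_ge0 // => j _; rewrite -expr2 sqr_ge0. Qed.

Lemma frob_eq0 p q (A : 'M[R]_(p, q)) : frob A A = 0 -> A = 0.
Proof.
move=> h; apply/matrixP => i j; rewrite mxE.
have h1 := psumr_eq0P (fun i _ => sumr_ge0 _ (fun j _ => (sqr_ge0 (A i j)))) h.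
have h2 := psumr_eq0P (fun j _ => sqr_ge0 (A i j)) (h1 i isT).
by apply/eqP; rewrite -sqrf_eq0 h2.
Qed.

Lemma frob_tr p q (A B : 'M[R]_(p, q)) : frob A^T B^T = frob A B.
Proof. by rewrite /frob exchange_big; apply: eq_bigr => i _; apply: eq_bigr => j _; rewrite !mxE. Qed.

Lemma frob_trace p q (A B : 'M[R]_(p, q)) : frob A B = \tr (A^T *m B).
Proof.
rewrite /frob /mxtrace exchange_big; apply: eq_bigr => j _; rewrite mxE.
by apply: eq_bigr => i _; rewrite mxE.
Qed.

Lemma frob_conj k (Q A B : 'M[R]_k) : Q^T *m Q = 1%:M ->
  frob (Q *m A *m Q^T) (Q *m B *m Q^T) = frob A B.
Proof.
move=> hQ; rewrite !frob_trace !trmx_mul trmxK -!mulmxA (mulmxA Q^T Q) hQ mul1mx.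
by rewrite mxtrace_mulC -!mulmxA hQ mulmx1.
Qed.

End Frob.


Lemma frob_block (R : realType) p1 p2 q1 q2 (a a' : 'M[R]_(p1, q1)) (b b' : 'M[R]_(p1, q2))
  (c c' : 'M[R]_(p2, q1)) (d d' : 'M[R]_(p2, q2)) :
  frob (block_mx a b c d) (block_mx a' b' c' d') =
  frob a a' + frob b b' + frob c c' + frob d d'.
Proof.
rewrite /frob big_split_ord /= -!addrA -big_split /= addrA -big_split /=.
congr (_ + _); apply: eq_bigr => i _; rewrite big_split_ord /=.
  by rewrite (eq_bigr _ (fun j _ => congr2 _ (block_mxEul _ _ _ _ _ _) (block_mxEul _ _ _ _ _ _)))
   (eq_bigr _ (fun j _ => congr2 _ (block_mxEur _ _ _ _ _ _) (block_mxEur _ _ _ _ _ _))).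
by rewrite (eq_bigr _ (fun j _ => congr2 _ (block_mxEdl _ _ _ _ _ _) (block_mxEdl _ _ _ _ _ _)))
   (eq_bigr _ (fun j _ => congr2 _ (block_mxEdr _ _ _ _ _ _) (block_mxEdr _ _ _ _ _ _))).
Qed.

Lemma frob_col (R : realType) p1 p2 q (a a' : 'M[R]_(p1, q)) (c c' : 'M[R]_(p2, q)) :
  frob (col_mx a c) (col_mx a' c') = frob a a' + frob c c'.
Proof.
rewrite /frob big_split_ord /=; congr (_ + _); apply: eq_bigr => i _;
  apply: eq_bigr => j _; by rewrite ?col_mxEu ?col_mxEd.
Qed.

Lemma frob_row (R : realType) p q1 q2 (a a' : 'M[R]_(p, q1)) (c c' : 'M[R]_(p, q2)) :
  frob (row_mx a c) (row_mx a' c') = frob a a' + frob c c'.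
Proof.
rewrite /frob -big_split /=; apply: eq_bigr => i _.
rewrite big_split_ord /=; congr (_ + _); apply: eq_bigr => j _; by rewrite ?row_mxEl ?row_mxEr.
Qed.



Section P2.
Variable R : realType.

Lemma psd_scale k (Y : 'M[R]_k) t : 0 <= t -> psd Y -> psd (t *: Y).
Proof.
move=> t0 [sY hY]; split.
  by rewrite /symmx -{2}sY; apply/matrixP => i j; rewrite !mxE.
by move=> v; rewrite -scalemxAr -scalemxAl mxE mulr_ge0.
Qed.

Lemma proj_psd_orth k (M : 'M[R]_k) : frob (proj_psd M) (M - proj_psd M) = 0.
Proof.
rewrite /proj_psd; case: xgetP => [Y _ [psdY minY] | _]; last by rewrite frob0l.
set c := frob Y (M - Y); set d := frob Y Y.
have key : forall u, u <= 1 -> 0 <= 2 * u * c + u ^+ 2 * d.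
  move=> u u1; have := minY ((1 - u) *: Y) (psd_scale (ltac:(lra) : 0 <= 1 - u) psdY).
  have -> : M - (1 - u) *: Y = (M - Y) + u *: Y.
    by rewrite scalerBl scale1r opprB addrCA addrC.
  rewrite /c /d !(frobDl, frobDr, frobZl, frobZr, frobNl, frobNr) (frobC Y M); nra.
have d0 : 0 <= d by exact: frob_ge0.
set K := d + `|c| + 1.
have K0 : 0 < K by rewrite /K; have := normr_ge0 c; lra.
set u := - c / K.
have huK : u * K = - c by rewrite /u mulrVK // unitfE gt_eqF.
have u1 : u <= 1.
  rewrite /u ler_pdivrMr // mul1r /K; have := ler_norm (- c); rewrite normrN; lra.
have := key u u1.
have h2 : 0 <= (2 * u * c + u ^+ 2 * d) * K ^+ 2 -> 0 <= c ^+ 2 * (d - 2 * K).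
  by move=> h; have -> : c ^+ 2 * (d - 2 * K) = (2 * u * c + u ^+ 2 * d) * K ^+ 2;
    [rewrite -[c]opprK -huK; ring | exact h].
move=> h; have h3 := h2 (mulr_ge0 h (sqr_ge0 K)).
have hdk : d - 2 * K < 0 by rewrite /K; have := normr_ge0 c; lra.
have : c ^+ 2 <= 0 by nra.
by move=> hc; apply/eqP; rewrite -sqrf_eq0 eq_le hc sqr_ge0.
Qed.

Lemma hadamard_perp p q (T G : 'M[R]_(p, q)) :
  hadamard (const_mx 1 - T) G = G - hadamard T G.
Proof. by apply/matrixP => i j; rewrite !mxE; ring. Qed.

Lemma ip_nonneg p q (T G : 'M[R]_(p, q)) :
  (forall i j, 0 < T i j < 1) ->
  0 <= frob (hadamard T G) (hadamard (const_mx 1 - T) G) /\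
  (frob (hadamard T G) (hadamard (const_mx 1 - T) G) = 0 -> G = 0).
Proof.
move=> hT.
have term : forall i j, hadamard T G i j * hadamard (const_mx 1 - T) G i j
     = (T i j * (1 - T i j)) * G i j ^+ 2 by move=> i j; rewrite !mxE; ring.
have tpos : forall i j, 0 < T i j * (1 - T i j).
  move=> i j; have /andP[h1 h2] := hT i j; apply: mulr_gt0 => //; lra.
have ge0 : forall i j, 0 <= hadamard T G i j * hadamard (const_mx 1 - T) G i j.
  by move=> i j; rewrite term mulr_ge0 ?sqr_ge0 // ltW.
split; first by rewrite /frob sumr_ge0 // => i _; rewrite sumr_ge0.
move=> h; apply/matrixP => i j; rewrite mxE.
have h1 := psumr_eq0P (fun i _ => sumr_ge0 _ (fun j _ => ge0 i j)) h.
have h2 := psumr_eq0P (fun j _ => ge0 i j) (h1 i isT).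
move: (h2 j isT); rewrite term => /eqP; rewrite mulf_eq0 (gt_eqF (tpos i j)) /=.
by rewrite sqrf_eq0 => /eqP.
Qed.

Lemma final_identity k (p : 'M[R]_k -> 'M[R]_k) (D E : 'M[R]_k) :
  (forall X Y, frob (p X) Y = frob (p X) (p Y)) ->
  frob (D + E) (D + E) - frob (p E + (D - p D)) (p E + (D - p D)) =
  frob (p D) (p D) + frob (E - p E) (E - p E) + 2 * frob D E.
Proof.
move=> hp.
rewrite !(frobDl, frobDr, frobNl, frobNr).
have := hp D E; have := hp E D; have := hp D D; have := hp E E.
have := frobC D E; have := frobC (p D) E; have := frobC (p E) D; 
have := frobC (p D) (p E); have := frobC (p D) D; have := frobC (p E) E.
lra.
Qed.

End P2.



Section P3.
Variable R : realType.
Variables (m k : nat) (As : 'I_m -> 'M[R]_k).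

Lemma frob_sumr (I : Type) (r : seq I) (P : pred I) (F : I -> 'M[R]_k) C :
  frob C (\sum_(i <- r | P i) F i) = \sum_(i <- r | P i) frob C (F i).
Proof. exact: (big_morph (frob C) (fun A B => frobDr A B C) (frob0r C)). Qed.

Lemma frob_suml (I : Type) (r : seq I) (P : pred I) (F : I -> 'M[R]_k) C :
  frob (\sum_(i <- r | P i) F i) C = \sum_(i <- r | P i) frob (F i) C.
Proof. rewrite frobC frob_sumr; apply: eq_bigr => i _; exact: frobC. Qed.

Lemma Aop_Aadj v : Aop As (Aadj As v) = AAadj As *m v.
Proof.
apply/matrixP => i j; rewrite (ord1 j) !mxE /Aadj frob_sumr.
by apply: eq_bigr => l _; rewrite frobZr mxE mulrC.
Qed.

Lemma frob_Aadj v Y : frob (Aadj As v) Y = (v^T *m Aop As Y) 0 0.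
Proof.
rewrite /Aadj frob_suml mxE; apply: eq_bigr => l _.
by rewrite frobZl !mxE.
Qed.

Lemma AAadj_sym : (AAadj As)^T = AAadj As.
Proof. by apply/matrixP => i j; rewrite !mxE frobC. Qed.

Lemma Aop_D X Y : Aop As (X + Y) = Aop As X + Aop As Y.
Proof. by apply/matrixP => i j; rewrite !mxE frobDr. Qed.

Hypothesis hsurj : forall v : 'cV[R]_m, exists Y : 'M[R]_k, symmx Y /\ Aop As Y = v.

Lemma AAadj_unit : AAadj As \in unitmx.
Proof.
rewrite -row_free_unit -kermx_eq0; apply/negPn/negP => hK.
have [i hi] : exists i, row i (kermx (AAadj As)) != 0.
  apply/existsP; apply: contraR hK => /existsPn h; apply/eqP/matrixP => i j.
  have := h i; rewrite negbK => /eqP /matrixP /(_ 0 j); rewrite !mxE => ->.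
  by rewrite ?mxE.
set v := row i (kermx (AAadj As)).
have hv : v *m AAadj As = 0 by apply/sub_kermxP; exact: row_sub.
set w := v^T.
have hw : AAadj As *m w = 0 by rewrite /w -AAadj_sym -trmx_mul hv trmx0.
have hZ : Aadj As w = 0.
  apply: frob_eq0; rewrite frob_Aadj Aop_Aadj hw mulmx0 mxE; done.
have [Y [_ hY]] := hsurj w.
have : frob (Aadj As w) Y = 0 by rewrite hZ frob0l.
rewrite frob_Aadj hY mxE => hs.
have hw0 : w = 0.
  have hsum : \sum_(l < m) w l 0 ^+ 2 = 0.
    by rewrite -[RHS]hs; apply: eq_bigr => l2 _; rewrite [w^T 0 l2]mxE expr2.
  apply/matrixP => l j; rewrite (ord1 j) [RHS]mxE.
  have := psumr_eq0P (F := fun l => w l 0 ^+ 2) (fun l _ => sqr_ge0 _) hsum (i:=l) isT.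
  by move/eqP; rewrite sqrf_eq0 => /eqP.
move: hi; rewrite -/v; have -> : v = w^T by rewrite /w trmxK.
by rewrite hw0 trmx0 eqxx.
Qed.

Lemma Pop_idem X : Pop As (Pop As X) = Pop As X.
Proof.
by rewrite {1}/Pop Aop_Aadj mulmxA mulmxA mulVmx ?AAadj_unit // mul1mx.
Qed.

Lemma Pop_sa X Y : frob (Pop As X) Y = frob X (Pop As Y).
Proof.
rewrite (frobC X) /Pop !frob_Aadj !trmx_mul trmx_inv AAadj_sym.
set aX := Aop As X; set aY := Aop As Y; set Gi := invmx (AAadj As).
transitivity ((aX^T *m Gi *m aY)^T 0 0); first by rewrite [RHS]mxE.
by rewrite !trmx_mul trmxK /Gi trmx_inv AAadj_sym mulmxA.
Qed.

Lemma Pop_pp X Y : frob (Pop As X) Y = frob (Pop As X) (Pop As Y).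
Proof. by rewrite -{1}(Pop_idem X) Pop_sa. Qed.

End P3.



Lemma core (R : realType) r b s (aa : 'M[R]_r) (ba : 'M[R]_(b,r)) (bb Pm : 'M[R]_b)
  (ga TH : 'M[R]_(s,r)) (gb : 'M[R]_(s,b)) (gg : 'M[R]_s) :
  frob Pm (bb - Pm) = 0 ->
  frob (block_mx (block_mx aa ba^T ba Pm) (col_mx TH^T 0) (row_mx TH 0) 0)
   (block_mx (block_mx aa ba^T ba bb) (col_mx ga^T gb^T) (row_mx ga gb) gg
    - block_mx (block_mx aa ba^T ba Pm) (col_mx TH^T 0) (row_mx TH 0) 0)
  = 2 * frob TH (ga - TH).
Proof.
move=> hP; rewrite frobBr !frob_block !frob_col !frob_row ?frob0l ?frob0r !frob_tr.
rewrite frobBr in hP; rewrite frobBr; lra.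
Qed.

Lemma Hh_block (R : realType) r b s (Hh : 'M[R]_(r + b + s)) : Hh^T = Hh ->
  Hh = block_mx (block_mx (blk_aa Hh) (blk_ba Hh)^T (blk_ba Hh) (blk_bb Hh))
     (col_mx (blk_ga Hh)^T (rsubmx (dlsubmx Hh))^T) (row_mx (blk_ga Hh) (rsubmx (dlsubmx Hh)))
     (drsubmx Hh).
Proof.
move=> sH.
have UT : (ulsubmx Hh)^T = ulsubmx Hh by rewrite trmx_ulsub sH.
rewrite /blk_aa /blk_ba /blk_bb /blk_ga -tr_row_mx hsubmxK.
rewrite trmx_dlsub UT trmx_dlsub sH submxK.
by rewrite submxK.
Qed.
Unset Implicit Arguments.

Theorem lemma16 (R : realType) (m r b s : nat)
  (As : 'I_m -> 'M[R]_(r + b + s)) (bv : 'cV[R]_m) (C : 'M[R]_(r + b + s))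
  (X : 'M[R]_(r + b + s)) (y : 'cV[R]_m) (S : 'M[R]_(r + b + s))
  (sigma : R) (Q : 'M[R]_(r + b + s)) (lam : 'rV[R]_(r + b + s))
  (H : 'M[R]_(r + b + s)) :
  (* A_i in S^n, A surjective from S^n onto R^m *)
  (forall i, symmx (As i)) ->
  (forall v : 'cV[R]_m, exists Y : 'M[R]_(r + b + s), symmx Y /\ Aop As Y = v) ->
  (* (X, y, S) is a KKT point of the primal/dual SDP pair *)
  symmx C ->
  Aop As X = bv -> psd X ->
  Aadj As y + S = C -> psd S ->
  frob X S = 0 ->
  (* Z = X - sigma S = Q diag(lambda) Q^T, Q orthogonal *)
  0 < sigma ->
  Q^T *m Q = 1%:M ->
  X - sigma *: S = Q *m diag_mx lam *m Q^T ->
  (* r = rank X, s = rank S, and the ordering/sign pattern of the eigenvalues *)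
  \rank X = r -> \rank S = s ->
  (forall i j : 'I_(r + b + s), (i <= j)%N -> lam 0 j <= lam 0 i) ->
  (forall i : 'I_(r + b + s), (i < r)%N -> 0 < lam 0 i) ->
  (forall i : 'I_(r + b + s), (r <= i)%N -> (i < r + b)%N -> lam 0 i = 0) ->
  (forall i : 'I_(r + b + s), (r + b <= i)%N -> lam 0 i < 0) ->
  (* H in S^n *)
  symmx H ->
  let Hga := blk_ga (Hhat Q H) in
  let ip := frob (hadamard (Theta lam) Hga) (hadamard (Thetap lam) Hga) in
  [/\ frob (Dt Q lam H) (Dtp Q lam H) = 2 * ip,
      0 <= 2 * ip,
      (frob (Dt Q lam H) (Dtp Q lam H) = 0 <-> Hga = 0) &
      frob H H - frob (Mt As Q lam H) (Mt As Q lam H) =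
        frob (Pop As (Dt Q lam H)) (Pop As (Dt Q lam H))
        + frob (Pperp As (Dtp Q lam H)) (Pperp As (Dtp Q lam H))
        + 4 * ip].
Proof.
move=> _ hsurj _ _ _ _ _ _ _ hQ _ _ _ _ hpos _ hneg sH Hga ip.
have hQQ : Q *m Q^T = 1%:M by apply: mulmx1C.
have hT : forall i j, 0 < Theta lam i j < 1.
  move=> i j; rewrite mxE.
  have hx : 0 < lam 0 (alpha b s j) by apply: hpos; rewrite /alpha /=; exact: ltn_ord.
  have hy : lam 0 (gamma r b i) < 0 by apply: hneg; rewrite /gamma /=; exact: leq_addr.
  have hd : 0 < lam 0 (alpha b s j) - lam 0 (gamma r b i) by lra.
  apply/andP; split; first by rewrite divr_gt0.
  by rewrite ltr_pdivrMr // mul1r; lra.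
have [ip0 ipeq] := ip_nonneg Hga hT.
rewrite -/(Thetap lam) -/ip in ip0 ipeq.
set Hh := Hhat Q H.
have sHh : Hh^T = Hh by rewrite /Hh /Hhat !trmx_mul trmxK sH mulmxA.
set B := block_mx (block_mx (blk_aa Hh) (blk_ba Hh)^T (blk_ba Hh) (proj_psd (blk_bb Hh)))
        (col_mx (hadamard (Theta lam) (blk_ga Hh))^T 0)
        (row_mx (hadamard (Theta lam) (blk_ga Hh)) 0) 0.
have eD : Dt Q lam H = Q *m B *m Q^T by [].
have eHQ : H = Q *m Hh *m Q^T.
  by rewrite /Hh /Hhat !mulmxA hQQ mul1mx -mulmxA hQQ mulmx1.
have eE : Dtp Q lam H = Q *m (Hh - B) *m Q^T.
  by rewrite /Dtp eD mulmxBr mulmxBl -eHQ.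
have h1 : frob (Dt Q lam H) (Dtp Q lam H) = 2 * ip.
  rewrite eD eE frob_conj //.
  rewrite [X in X - B](Hh_block sHh) /B core; last exact: proj_psd_orth.
  by rewrite /ip /Hga -/Hh /Thetap hadamard_perp.
split => //.
- by rewrite mulr_ge0.
- have hz : forall p q (T : 'M[R]_(p,q)), hadamard T 0 = 0.
    by move=> p q T; apply/matrixP=> i j; rewrite !mxE mulr0.
  rewrite h1; split; last by move=> h; rewrite /ip h !hz frob0l mulr0.
  by move=> h; apply: ipeq; lra.
have := @final_identity R _ (Pop As) (Dt Q lam H) (Dtp Q lam H) (Pop_pp hsurj).
have eH2 : Dt Q lam H + Dtp Q lam H = H by rewrite /Dtp addrC subrK.
rewrite eH2 h1 /Mt /Pperp => ->; ring.
Qed.
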